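(* Let $F$ be a field of characteristic $3$ and let $L=psl_3(F)$. Then no maximal subalgebra of $L$ is semi-modular in $L$.
   Context: $psl_3(F)=sl_3(F)/F I$ (in characteristic 3 the identity matrix $I$ lies in $sl_3(F)$ and spans its centre). For subalgebras $U,B$ of a Lie algebra $L$, $\langle U,B\rangle$ denotes the subalgebra generated by $U\cup B$. A subalgebra $B$ covers a subalgebra $A$ if $A$ is a maximal subalgebra of $B$. $U$ is upper modular (um) in $L$ if whenever $B$ is a subalgebra of $L$ which covers $U\cap B$, then $\langle U,B\rangle$ covers $U$; $U$ is lower modular (lm) in $L$ if whenever $B$ is a subalgebra of $L$ such that $\langle U,B\rangle$ covers $U$, then $B$ covers $U\cap B$; $U$ is semi-modular (sm) in $L$ if it is both um and lm in $L$. *)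

(* Defs.v *)
From HB Require Import structures.
From mathcomp Require Import all_boot all_order all_algebra.
Set Implicit Arguments. Unset Strict Implicit. Unset Printing Implicit Defensive.
Import GRing.Theory.
Local Open Scope ring_scope.

Section LieLattice.
Variables (F : fieldType) (V : vectType F) (br : V -> V -> V).

Definition subalg (U : {vspace V}) : Prop :=
  forall x y, x \in U -> y \in U -> br x y \in U.

Definition generated (A S : {vspace V}) : Prop :=
  [/\ subalg S, (A <= S)%VS &
      forall T, subalg T -> (A <= T)%VS -> (S <= T)%VS].

Definition maximal_in (A B : {vspace V}) : Prop :=
  [/\ subalg A, subalg B, (A <= B)%VS, A != B &
      forall C, subalg C -> (A <= C)%VS -> (C <= B)%VS -> C = A \/ C = B].

Definition covers (B A : {vspace V}) : Prop := maximal_in A B.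

(* <U, B> (the subalgebra generated by U \cup B) covers U;
   the generated subalgebra exists and is unique, so "every S generated by
   U + B" is just "<U,B>" *)
Definition join_covers (U B : {vspace V}) : Prop :=
  forall S, generated (U + B)%VS S -> covers S U.

Definition upper_modular (U : {vspace V}) : Prop :=
  forall B, subalg B -> covers B (U :&: B)%VS -> join_covers U B.

Definition lower_modular (U : {vspace V}) : Prop :=
  forall B, subalg B -> join_covers U B -> covers B (U :&: B)%VS.

Definition semi_modular (U : {vspace V}) : Prop :=
  upper_modular U /\ lower_modular U.

End LieLattice.

(* Model: psl_3(F) = sl_3(F)/F I is realised (for char F = 3, where I \in sl_3)
   by the canonical coset representatives  x - x_{11} I, i.e. the subspace
   { x in M_3(F) | tr x = 0, x_{11} = 0 }  (index 1 = middle row/column),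
   with bracket  [x,y] := c - c_{11} I  where  c = xy - yx. *)
Section PSL3.
Variable F : fieldType.

Definition mid : 'I_3 := inord 1.

Definition psl3_space : {vspace 'M[F]_3} :=
  (lker (linfun (fun A : 'M[F]_3 => (\tr A : F^o))) :&:
   lker (linfun (fun A : 'M[F]_3 => (A mid mid : F^o))))%VS.

Definition psl3 : vectType F := subvs_of psl3_space.

Definition comm3 (x y : 'M[F]_3) : 'M[F]_3 := x * y - y * x.

Definition psl3_br (x y : psl3) : psl3 :=
  let c := comm3 (vsval x) (vsval y) in
  vsproj psl3_space (c - c mid mid *: 1).

End PSL3.

(* Main.v *)
Require Import Defs.
From HB Require Import structures.
From mathcomp Require Import all_boot all_order all_algebra.
Set Implicit Arguments. Unset Strict Implicit. Unset Printing Implicit Defensive.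
Import GRing.Theory.
Local Open Scope ring_scope.

Module T2.
Section S.
Variable F : fieldType.
Hypothesis char3 : 3%N \in [pchar F].

Definition E (a b : nat) : 'M[F]_3 := \matrix_(r, c) ((r == a :> nat) && (c == b :> nat))%:R.
Definition H : 'M[F]_3 := E 0 0 - E 2 2.

Lemma midE : nat_of_ord (mid) = 1%N.
Proof. by rewrite /mid inordK. Qed.

Lemma sum3 (g : 'I_3 -> F) : \sum_(k < 3) g k = g (inord 0) + g (inord 1) + g (inord 2).
Proof.
rewrite !big_ord_recr big_ord0 /= add0r.
congr (_ + _ + _); congr g; apply/val_inj => /=; rewrite inordK //.
Qed.

Lemma two : 1 + 1 = - 1 :> F.
Proof. have := pcharf0 char3; rewrite -[3%N]/(1+1+1)%N !natrD => h3.
by apply/eqP; rewrite -subr_eq0 opprK h3. Qed.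

Definition P (c : 'M[F]_3) := c - c mid mid *: 1.

Ltac simp := rewrite ?(subr0, sub0r, mul0r, mulr0, mul1r, mulr1, add0r, addr0, oppr0, opprK, mulN1r, mulrN1, mulNr, mulrN, subrr, scale0r, scaler0, scale1r).

Ltac mxcomp := apply/matrixP; case=> [[|[|[|?]]] ?] //; case=> [[|[|[|?]]] ?] //;
  rewrite /P /comm3 /H !mxE ?sum3 !mxE ?midE /=;
  rewrite ?inordK //=; simp; rewrite ?two ?opprK //; try by rewrite -opprD two opprK.


Definition elt (A : 'M[F]_3) : psl3 F := vsproj (psl3_space F) A.

Lemma mem_space (A : 'M[F]_3) : \tr A = 0 -> A mid mid = 0 -> A \in psl3_space F.
Proof.
move=> h1 h2.
pose f : 'M[F]_3 -> F^o := fun A => A mid mid.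
have lin_f : linear f by move=> k u v; rewrite /f !mxE.
pose flM := GRing.isLinear.Build _ _ _ _ f lin_f.
pose fL : {linear _ -> F^o} := HB.pack f flM.
rewrite /psl3_space memv_cap !memv_ker lfunE /= h1 eqxx /=.
by rewrite (lfunE fL) /= /f h2.
Qed.

Lemma eltK A : A \in psl3_space F -> vsval (elt A) = A.
Proof. exact: vsprojK. Qed.

Lemma tr_H : \tr H = 0.
Proof. by rewrite /mxtrace sum3 /H !mxE ?inordK //=; simp. Qed.

Ltac memt := apply: mem_space; [rewrite /mxtrace sum3 /H !mxE ?inordK //=; simp
  | rewrite /H !mxE ?midE //=; simp]; done.

Lemma memH : H \in psl3_space F. Proof. memt. Qed.
Lemma memE01 : E 0 1 \in psl3_space F. Proof. memt. Qed.
Lemma memE12 : E 1 2 \in psl3_space F. Proof. memt. Qed.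
Lemma memE20 : E 2 0 \in psl3_space F. Proof. memt. Qed.
Lemma memE10 : E 1 0 \in psl3_space F. Proof. memt. Qed.
Lemma memE21 : E 2 1 \in psl3_space F. Proof. memt. Qed.
Lemma memE02 : E 0 2 \in psl3_space F. Proof. memt. Qed.

Notation br := (@psl3_br F).

Lemma P_lin a (A B : 'M[F]_3) : P (a *: A + B) = a *: P A + P B.
Proof.
by rewrite /P !mxE scalerDl -scalerA scalerBr opprD addrACA.
Qed.

Lemma comm3_lin a (A B C : 'M[F]_3) : comm3 (a *: A + B) C = a *: comm3 A C + comm3 B C.
Proof.
rewrite /comm3 mulrDl mulrDr -scalerAl -scalerAr scalerBr opprD addrACA.
by [].
Qed.

Lemma brE x y : br x y = vsproj (psl3_space F) (P (comm3 (vsval x) (vsval y))).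
Proof. by []. Qed.

Lemma br_lin a x y z : br (a *: x + y) z = a *: br x z + br y z.
Proof. by rewrite !brE linearP /= comm3_lin P_lin linearP. Qed.

Lemma brN x y : br y x = - br x y.
Proof.
rewrite !brE -linearN; congr vsproj.
by rewrite /P /comm3 !mxE [in RHS]opprD opprK -scaleNr !opprB.
Qed.

Lemma brxx x : br x x = 0.
Proof. by rewrite brE /comm3 subrr /P mxE scale0r subr0 linear0. Qed.
Lemma br_elt A B : A \in psl3_space F -> B \in psl3_space F ->
  br (elt A) (elt B) = elt (P (comm3 A B)).
Proof. by move=> hA hB; rewrite brE !eltK. Qed.

Definition h := elt H.
Definition a1 := elt (E 0 1).
Definition a2 := elt (E 1 2).
Definition a3 := elt (E 2 0).
Definition b1 := elt (E 1 0).
Definition b2 := elt (E 2 1).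
Definition b3 := elt (E 0 2).

Ltac brt := rewrite /h /a1 /a2 /a3 /b1 /b2 /b3 br_elt ?memH ?memE01 ?memE12 ?memE20 ?memE10 ?memE21 ?memE02 //;
  rewrite -?linearN; try (rewrite -(linear0 (vsproj (psl3_space F)))); congr vsproj; mxcomp.

Lemma br_h_a1 : br h a1 = a1. Proof. brt. Qed.
Lemma br_h_a2 : br h a2 = a2. Proof. brt. Qed.
Lemma br_h_a3 : br h a3 = a3. Proof. brt. Qed.
Lemma br_h_b1 : br h b1 = - b1. Proof. brt. Qed.
Lemma br_h_b2 : br h b2 = - b2. Proof. brt. Qed.
Lemma br_h_b3 : br h b3 = - b3. Proof. brt. Qed.
Lemma br_a1_a2 : br a1 a2 = b3. Proof. brt. Qed.
Lemma br_a2_a3 : br a2 a3 = b1. Proof. brt. Qed.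
Lemma br_a1_a3 : br a1 a3 = - b2. Proof. brt. Qed.
Lemma br_b1_b2 : br b1 b2 = - a3. Proof. brt. Qed.
Lemma br_b1_b3 : br b1 b3 = a2. Proof. brt. Qed.
Lemma br_b2_b3 : br b2 b3 = - a1. Proof. brt. Qed.
Lemma br_a3_b3 : br a3 b3 = - h. Proof. brt. Qed.
Lemma br_a1_b2 : br a1 b2 = 0. Proof. brt. Qed.
Lemma br_a1_b3 : br a1 b3 = 0. Proof. brt. Qed.
Lemma br_a2_b1 : br a2 b1 = 0. Proof. brt. Qed.
Lemma br_a2_b3 : br a2 b3 = 0. Proof. brt. Qed.
Lemma br_a3_b1 : br a3 b1 = 0. Proof. brt. Qed.
Lemma br_a3_b2 : br a3 b2 = 0. Proof. brt. Qed.














End S.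

End T2.
Import T2.

Section S2.
Variable F : fieldType.
Hypothesis char3 : 3%N \in [pchar F].
Notation br := (@psl3_br F).
Notation h := (h F). Notation a1 := (a1 F). Notation a2 := (a2 F). Notation a3 := (a3 F).
Notation b1 := (b1 F). Notation b2 := (b2 F). Notation b3 := (b3 F).
Notation H := (H F). Notation E := (E F).
Ltac simp := rewrite ?(subr0, sub0r, mul0r, mulr0, mul1r, mulr1, add0r, addr0, oppr0, opprK, mulN1r, mulrN1, mulNr, mulrN, subrr, scale0r, scaler0, scale1r).

Lemma space_mem (A : 'M[F]_3) : A \in psl3_space F -> \tr A = 0 /\ A mid mid = 0.
Proof.
pose f : 'M[F]_3 -> F^o := fun A => A mid mid.
have lin_f : linear f by move=> k u v; rewrite /f !mxE.
pose flM := GRing.isLinear.Build _ _ _ _ f lin_f.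
pose fL : {linear _ -> F^o} := HB.pack f flM.
rewrite /psl3_space memv_cap !memv_ker lfunE /= (lfunE fL) /= /f.
by case/andP => /eqP -> /eqP ->.
Qed.

Lemma span_all (M : {vspace psl3 F}) : h \in M -> a1 \in M -> a2 \in M -> a3 \in M ->
  b1 \in M -> b2 \in M -> b3 \in M -> (fullv <= M)%VS.
Proof.
move=> hh h1 h2 h3 h4 h5 h6; apply/subvP => x _.
set X := vsval x.
have [tX mX] := space_mem (subvsP x).
have -> : x = X (inord 0) (inord 0) *: h + X (inord 0) (inord 1) *: a1
   + X (inord 1) (inord 2) *: a2 + X (inord 2) (inord 0) *: a3
   + X (inord 1) (inord 0) *: b1 + X (inord 2) (inord 1) *: b2
   + X (inord 0) (inord 2) *: b3.
  apply: subvs_inj; rewrite !linearD !linearZ /= !eltK ?memH ?memE01 ?memE12 ?memE20 ?memE10 ?memE21 ?memE02 //.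
  move: tX mX; rewrite /mxtrace sum3 /mid => tX mX.
  apply/matrixP => i j; rewrite -[X i j](congr2 X (inord_val i) (inord_val j)).
  rewrite /H !mxE.
  case: i => [[|[|[|?]]] ?] //; case: j => [[|[|[|?]]] ?] //=; rewrite ?inordK //=; simp; try done.
  by move: tX; rewrite mX addr0 addrC => /eqP; rewrite addr_eq0 => /eqP.
by rewrite !rpredD ?rpredZ.
Qed.
Lemma br0l z : br 0 z = 0.
Proof. rewrite brE linear0 /comm3 mul0r mulr0 subrr /P. have -> : (0 : 'M[F]_3) mid mid = 0 by rewrite mxE. by rewrite scale0r subr0 linear0. Qed.
Lemma brDl x y z : br (x + y) z = br x z + br y z.
Proof. by have := br_lin 1 x y z; rewrite !scale1r. Qed.
Lemma brZl a x z : br (a *: x) z = a *: br x z.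
Proof. by have := br_lin a x 0 z; rewrite br0l !addr0. Qed.
Lemma brDr x y z : br z (x + y) = br z x + br z y.
Proof. by rewrite brN brDl opprD -!brN. Qed.
Lemma brZr a x z : br z (a *: x) = a *: br z x.
Proof. by rewrite brN brZl -scalerN -brN. Qed.

Lemma br_shift_p x y c d : br h x = x -> br h y = y ->
  br (x + c *: h) (y + d *: h) = br x y - d *: x + c *: y.
Proof.
move=> hx hy; rewrite !brDl !brDr !brZl !brZr brxx !scaler0 addr0 hy.
by rewrite (brN h x) hx scalerN.
Qed.

Lemma br_shift_n x y c d : br h x = - x -> br h y = - y ->
  br (x + c *: h) (y + d *: h) = br x y + d *: x - c *: y.
Proof.
move=> hx hy; rewrite !brDl !brDr !brZl !brZr brxx !scaler0 addr0 hy.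
by rewrite (brN h x) hx opprK scalerN.
Qed.
Lemma lm_pair (M : {vspace psl3 F}) x y :
  maximal_in br M fullv -> lower_modular br M -> x \notin M -> y \notin <[x]>%VS ->
  br x y \in (<[x]> + <[y]>)%VS ->
  exists2 v, v \in M & (v \in (<[x]> + <[y]>)%VS) && (v != 0).
Proof.
move=> hmax hlm xM yx hxy.
have [sM _ _ neqM maxM] := hmax.
set B := (<[x]> + <[y]>)%VS.
have xB : x \in B by rewrite -[x]addr0 memv_add ?memv_line ?mem0v.
have yB : y \in B.
  by rewrite -[y]add0r memv_add ?memv_line ?mem0v.
have brxB : forall w, w \in B -> br x w \in B.
  move=> w /memv_addP [u /vlineP [a ->] [v /vlineP [b ->] ->]].
  by rewrite brDr !brZr brxx scaler0 add0r rpredZ.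
have bryB : forall w, w \in B -> br y w \in B.
  move=> w /memv_addP [u /vlineP [a ->] [v /vlineP [b ->] ->]].
  by rewrite brDr !brZr brxx scaler0 addr0 brN rpredZ // rpredN.
have subB : subalg br B.
  move=> u w /memv_addP [u1 /vlineP [a ->] [v1 /vlineP [b ->] ->]] hw.
  by rewrite brDl !brZl rpredD // rpredZ ?brxB ?bryB.
have hjc : join_covers br M B.
  move=> S [sS sMBS _].
  have sMS : (M <= S)%VS by apply: subv_trans sMBS; exact: addvSl.
  have [eSM | ->] := maxM S sS sMS (subvf S); last by [].
  exfalso; move: xM; rewrite -eSM => /negP; apply.
  by apply: (subvP sMBS); rewrite -[x]add0r memv_add ?mem0v.
have [_ _ _ neqMB maxMB] := hlm B subB hjc.
case: (eqVneq (M :&: B)%VS 0%VS) => [e0 | ne0]; last first.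
  exists (vpick (M :&: B)%VS).
    by move: (memv_pick (M :&: B)%VS); rewrite memv_cap => /andP [].
  apply/andP; split; first by move: (memv_pick (M :&: B)%VS); rewrite memv_cap => /andP [].
  by rewrite vpick0.
exfalso.
have subC : subalg br <[x]>%VS.
  move=> u w /vlineP [a ->] /vlineP [b ->].
  by rewrite brZl brZr brxx !scaler0 mem0v.
have sC : ((M :&: B) <= <[x]>)%VS by rewrite e0 sub0v.
have [eC | eC] := maxMB _ subC sC (addvSl _ _).
  by have := memv_line x; rewrite eC memv_cap (negPf xM).
by move: yx; rewrite eC yB.
Qed.
Lemma zid (V : zmodType) (z X Y k : V) : (z - X + Y) + (X + k) - (Y + k) = z.
Proof.
rewrite (addrC X k) addrA (addrAC _ k X) (addrAC _ Y X) subrK -(addrA z) addrK //.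
Qed.
Lemma zid2 (V : zmodType) (z X Y k : V) : (z + X - Y) - (X + k) + (Y + k) = z.
Proof.
have := @zid V z (-X) (-Y) (-k); by rewrite !opprK -!opprD opprK.
Qed.

Lemma two2 (a : F) : a + a = - a.
Proof. by rewrite -{1 2}[a]mulr1 -mulrDr (two char3) mulrN1. Qed.

Lemma step_hin (M : {vspace psl3 F}) x y v : subalg br M -> h \in M -> x \notin M ->
  br h x = x -> br h y = - y -> v \in M -> v \in (<[x]> + <[y]>)%VS -> v != 0 -> y \in M.
Proof.
move=> sM hM xM hx hy vM /memv_addP [u /vlineP [a ->] [w /vlineP [b ->] ev]] v0.
have t : (a + a) *: x \in M.
  have := rpredD vM (sM _ _ hM vM).
  by rewrite ev brDr !brZr hx hy scalerN addrACA subrr addr0 -scalerDl.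
rewrite two2 in t.
case: (eqVneq a 0) => [a0 | a0].
  move: v0 vM; rewrite ev a0 scale0r add0r => b0 vM.
  have b0' : b != 0 by apply: contraNneq b0 => ->; rewrite scale0r.
  by rewrite -(scalerK b0' y) rpredZ.
have a0' : - a != 0 by rewrite oppr_eq0.
by move: xM; rewrite -(scalerK a0' x) rpredZ.
Qed.

Lemma step_hout (M : {vspace psl3 F}) z v : h \notin M ->
  v \in M -> v \in (<[h]> + <[z]>)%VS -> v != 0 -> exists c, z + c *: h \in M.
Proof.
move=> hM vM /memv_addP [u /vlineP [a ->] [w /vlineP [b ->] ev]] v0.
case: (eqVneq b 0) => [b0 | b0].
  move: v0 vM; rewrite ev b0 scale0r addr0 => a0 vM.
  have a0' : a != 0 by apply: contraNneq a0 => ->; rewrite scale0r.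
  by move: hM; rewrite -(scalerK a0' h) rpredZ.
exists (b^-1 * a).
have -> : z + (b^-1 * a) *: h = b^-1 *: v.
  by rewrite ev scalerDr !scalerA mulVf // scale1r addrC.
by rewrite rpredZ.
Qed.

Lemma notline (x y : psl3 F) (r c : 'I_3) : vsval x r c = 0 -> vsval y r c != 0 -> y \notin <[x]>%VS.
Proof.
move=> hx hy; apply/negP => /vlineP [k ek]; move: hy.
by rewrite ek linearZ /= mxE hx mulr0 eqxx.
Qed.

Ltac nlt r c := apply: (@notline _ _ (inord r) (inord c));
  rewrite /T2.h /T2.a1 /T2.a2 /T2.a3 /T2.b1 /T2.b2 /T2.b3 !eltK ?memH ?memE01 ?memE12 ?memE20 ?memE10 ?memE21 ?memE02 //
  /T2.H !mxE ?inordK //=; simp; rewrite ?oner_neq0 //.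

Lemma nl_h_a1 : a1 \notin <[h]>%VS. Proof. nlt 0%N 1%N. Qed.
Lemma nl_h_a2 : a2 \notin <[h]>%VS. Proof. nlt 1%N 2%N. Qed.
Lemma nl_h_b1 : b1 \notin <[h]>%VS. Proof. nlt 1%N 0%N. Qed.
Lemma nl_h_b2 : b2 \notin <[h]>%VS. Proof. nlt 2%N 1%N. Qed.
Lemma nl_a1_b2 : b2 \notin <[a1]>%VS. Proof. nlt 2%N 1%N. Qed.
Lemma nl_a1_b3 : b3 \notin <[a1]>%VS. Proof. nlt 0%N 2%N. Qed.
Lemma nl_a2_b1 : b1 \notin <[a2]>%VS. Proof. nlt 1%N 0%N. Qed.
Lemma nl_a2_b3 : b3 \notin <[a2]>%VS. Proof. nlt 0%N 2%N. Qed.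
Lemma nl_a3_b1 : b1 \notin <[a3]>%VS. Proof. nlt 1%N 0%N. Qed.
Lemma nl_a3_b2 : b2 \notin <[a3]>%VS. Proof. nlt 2%N 1%N. Qed.
Lemma main_thm (M : {vspace psl3 F}) : maximal_in br M fullv -> ~ semi_modular br M.
Proof.
move=> hmax [_ hlm].
have [sM _ _ neqM _] := hmax.
case: (boolP (h \in M)) => hM.
  have key : forall x y, x \notin M -> br h x = x -> br h y = - y -> y \notin <[x]>%VS ->
      br x y = 0 -> y \in M.
    move=> x y xM hx hy yx e.
    have [v vM /andP [vB v0]] := lm_pair hmax hlm xM yx (etrans (congr1 _ e) (mem0v _)).
    exact: (step_hin sM hM xM hx hy vM vB v0).
  have ha1 : a1 \in M.
    apply/contraT => xM.
    have b2M := key a1 b2 xM (ltac:(by rewrite br_h_a1)) (ltac:(by rewrite br_h_b2)) nl_a1_b2 (ltac:(by rewrite br_a1_b2)).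
    have b3M := key a1 b3 xM (ltac:(by rewrite br_h_a1)) (ltac:(by rewrite br_h_b3)) nl_a1_b3 (ltac:(by rewrite br_a1_b3)).
    by have := sM _ _ b2M b3M; rewrite br_b2_b3 rpredN (negPf xM).
  have ha2 : a2 \in M.
    apply/contraT => xM.
    have b1M := key a2 b1 xM (ltac:(by rewrite br_h_a2)) (ltac:(by rewrite br_h_b1)) nl_a2_b1 (ltac:(by rewrite br_a2_b1)).
    have b3M := key a2 b3 xM (ltac:(by rewrite br_h_a2)) (ltac:(by rewrite br_h_b3)) nl_a2_b3 (ltac:(by rewrite br_a2_b3)).
    by have := sM _ _ b1M b3M; rewrite br_b1_b3 (negPf xM).
  have ha3 : a3 \in M.
    apply/contraT => xM.
    have hx : br h a3 = a3 by rewrite br_h_a3.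
    have b1M := key a3 b1 xM hx (ltac:(by rewrite br_h_b1)) nl_a3_b1 (ltac:(by rewrite br_a3_b1)).
    have b2M := key a3 b2 xM hx (ltac:(by rewrite br_h_b2)) nl_a3_b2 (ltac:(by rewrite br_a3_b2)).
    by have := sM _ _ b1M b2M; rewrite br_b1_b2 rpredN (negPf xM).
  have hb3 : b3 \in M by rewrite -br_a1_a2; apply: sM.
  have hb1 : b1 \in M by rewrite -br_a2_a3; apply: sM.
  have hb2 : b2 \in M by rewrite -rpredN -br_a1_a3; apply: sM.
  move/eqP: neqM; apply; apply/eqP.
  by rewrite eqEsubv subvf span_all.
have key : forall z, br h z \in (<[h]> + <[z]>)%VS -> z \notin <[h]>%VS ->
    exists c, z + c *: h \in M.
  move=> z hz zh.
  have [v vM /andP [vB v0]] := lm_pair hmax hlm hM zh hz.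
  exact: (step_hout hM vM vB v0).
have zin : forall z, z \in (<[h]> + <[z]>)%VS.
  by move=> z; rewrite -{1}[z]add0r memv_add ?mem0v ?memv_line.
have [c1 u1] := key a1 (ltac:(by rewrite br_h_a1 zin)) nl_h_a1.
have [c2 u2] := key a2 (ltac:(by rewrite br_h_a2 zin)) nl_h_a2.
have [d1 v1] := key b1 (ltac:(by rewrite br_h_b1 rpredN zin)) nl_h_b1.
have [d2 v2] := key b2 (ltac:(by rewrite br_h_b2 rpredN zin)) nl_h_b2.
have hb3 : b3 \in M.
  have := rpredB (rpredD (sM _ _ u1 u2) (rpredZ c2 u1)) (rpredZ c1 u2).
  rewrite br_shift_p ?br_h_a1 ?br_h_a2 // br_a1_a2.
  by rewrite !scalerDr !scalerA (mulrC c1 c2) zid.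
have ha3 : a3 \in M.
  have := rpredD (rpredB (sM _ _ v1 v2) (rpredZ d2 v1)) (rpredZ d1 v2).
  rewrite br_shift_n ?br_h_b1 ?br_h_b2 // br_b1_b2.
  by rewrite !scalerDr !scalerA (mulrC d1 d2) zid2 rpredN.
by have := sM _ _ ha3 hb3; rewrite br_a3_b3 rpredN (negPf hM).
Qed.
End S2.

Theorem proposition2p5 (F : fieldType) (char3 : 3%N \in [pchar F])
    (M : {vspace psl3 F}) :
  maximal_in (@psl3_br F) M fullv -> ~ semi_modular (@psl3_br F) M.
Proof. exact: main_thm. Qed.
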